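(* Let $K$ be a finite field, $\kappa$ an infinite cardinal, $(R_\alpha\mid\alpha<\kappa)$ a sequence of $K$-algebras, $P=\prod_{\alpha<\kappa}R_\alpha$ and $I=\bigoplus_{\alpha<\kappa}R_\alpha\subseteq P$. Let $R$ be a subring of $P$ with $1_R=1_P$, containing $I$ as an ideal, such that there is a ring isomorphism $\varphi:R/I\cong K$. Then $R$ is a semidirect product of $I$ and $K$, i.e., there exist ring homomorphisms $\pi:R\to K$ surjective with $\mathrm{Ker}\,\pi=I$ and $\nu:K\to R$ with $\pi\nu=\mathrm{id}_K$.
   Context: Rings are unital and ring homomorphisms preserve units. *)

(* Defs.v *)
From HB Require Import structures.
From mathcomp Require Import all_boot all_algebra.
From Stdlib Require Import List.
Set Implicit Arguments. Unset Strict Implicit. Unset Printing Implicit Defensive.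
Import GRing.Theory.
Local Open Scope ring_scope.

Definition infinite_type (A : Type) : Prop :=
  ~ (exists s : list A, forall a : A, List.In a s).

(* A K-algebra (K commutative) : a (unital, possibly zero) ring S together
   with a unital ring morphism K -> S whose image is central. *)
Definition central_structure (K : fieldType) (S : pzRingType)
  (f : {rmorphism K -> S}) : Prop :=
  forall (k : K) (x : S), f k * x = x * f k.

Section Product.
Variables (A : Type) (R : A -> pzRingType).
Definition prodR := forall a : A, R a.
Definition p0 : prodR := fun a => 0.
Definition p1 : prodR := fun a => 1.
Definition padd (x y : prodR) : prodR := fun a => x a + y a.
Definition popp (x : prodR) : prodR := fun a => - x a.
Definition pmul (x y : prodR) : prodR := fun a => x a * y a.

Definition in_dsum (x : prodR) : Prop :=
  exists s : list A, forall a : A, ~ List.In a s -> x a = 0.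

Definition is_subring (S : prodR -> Prop) : Prop :=
  [/\ S p1,
      forall x y, S x -> S y -> S (padd x y),
      forall x, S x -> S (popp x) &
      forall x y, S x -> S y -> S (pmul x y)].

(* f : S -> T (represented as a function on P, only its values on S matter)
   is a unital ring homomorphism from the subring S. *)
Definition subring_hom (T : pzRingType) (S : prodR -> Prop) (f : prodR -> T)
  : Prop :=
  [/\ f p1 = 1,
      forall x y, S x -> S y -> f (padd x y) = f x + f y &
      forall x y, S x -> S y -> f (pmul x y) = f x * f y].

Definition hom_into_subring (T : pzRingType) (S : prodR -> Prop)
  (g : T -> prodR) : Prop :=
  [/\ forall t, S (g t),
      g 1 = p1,
      forall t u, g (t + u) = padd (g t) (g u) &
      forall t u, g (t * u) = pmul (g t) (g u)].

Definition surj_ker_dsum (T : pzRingType) (S : prodR -> Prop) (f : prodR -> T)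
  : Prop :=
  (forall t : T, exists x, S x /\ f x = t) /\
  (forall x, S x -> (f x = 0 <-> in_dsum x)).
End Product.

(* Main.v *)
Require Import Defs.
From HB Require Import structures.
From mathcomp Require Import all_boot all_algebra.
From Stdlib Require Import ClassicalEpsilon FunctionalExtensionality.
Import GRing.Theory.
Local Open Scope ring_scope.

Lemma mem_In (T : eqType) (x : T) (s : seq T) : x \in s -> List.In x s.
Proof.
elim: s => //= y s IH; rewrite in_cons => /orP [/eqP ->|/IH]; auto.
Qed.

Theorem proposition4p7
  (K : finFieldType) (A : Type) (hA : infinite_type A)
  (R : A -> pzRingType) (alg : forall a : A, {rmorphism K -> R a})
  (halg : forall a : A, central_structure (alg a))
  (S : prodR R -> Prop) (hS : is_subring S)
  (hI : forall x : prodR R, in_dsum x -> S x)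
  (hquot : exists phi : prodR R -> K,
      subring_hom S phi /\ surj_ker_dsum S phi) :
  exists (pi : prodR R -> K) (nu : K -> prodR R),
    [/\ subring_hom S pi, surj_ker_dsum S pi,
        hom_into_subring S nu &
        forall k : K, pi (nu k) = k].
Proof.
case: hquot => phi [hphi hsk].
exists phi.
have [h1 hD hM] := hphi. have [hsurj hker] := hsk.
have [S1 SD SN SM] := hS.
have S0 : S (p0 R) by apply: (hI); exists nil.
have phi0 : phi (p0 R) = 0 by apply/(hker _ S0); exists nil.
have phiN : forall y, S y -> phi (popp y) = - phi y.
  move=> y Sy; apply/eqP; rewrite -subr_eq0 opprK -hD //; last by apply: (SN).
  have -> : padd (popp y) y = p0 R.
    by apply: functional_extensionality_dep => a; rewrite /padd /popp addNr.
  by rewrite phi0.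
pose x t := proj1_sig (constructive_indefinite_description _ (hsurj t)).
have hx : forall t, S (x t) /\ phi (x t) = t.
  by move=> t; exact: (proj2_sig (constructive_indefinite_description _ (hsurj t))).
have ds : forall y, S y -> phi y = 0 -> in_dsum y.
  by move=> y Sy; apply: (hker _ Sy).1.
pose eA t u := padd (x (t + u)) (popp (padd (x t) (x u))).
pose eM t u := padd (x (t * u)) (popp (pmul (x t) (x u))).
pose e1 := padd (x 1) (popp (p1 R)).
have SeA : forall t u, S (eA t u).
  move=> t u; apply: (SD); first exact: (hx _).1.
  by apply: (SN); apply: (SD); apply: (hx _).1.
have SeM : forall t u, S (eM t u).
  move=> t u; apply: (SD); first exact: (hx _).1.
  by apply: (SN); apply: (SM); apply: (hx _).1.
have Se1 : S e1 by apply: (SD); [exact: (hx _).1| exact: SN].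
have dA : forall t u, in_dsum (eA t u).
  move=> t u; apply: (ds) => //.
  rewrite /eA hD; [|exact: (hx _).1|by apply: (SN); apply: (SD); apply: (hx _).1].
  rewrite phiN; last by apply: (SD); apply: (hx _).1.
  by rewrite hD; try apply: (hx _).1; rewrite !(hx _).2 subrr.
have dM : forall t u, in_dsum (eM t u).
  move=> t u; apply: (ds) => //.
  rewrite /eM hD; [|exact: (hx _).1|by apply: (SN); apply: (SM); apply: (hx _).1].
  rewrite phiN; last by apply: (SM); apply: (hx _).1.
  by rewrite hM; try apply: (hx _).1; rewrite !(hx _).2 subrr.
have d1 : in_dsum e1.
  apply: (ds) => //; rewrite /e1 hD; [|exact: (hx _).1|exact: (SN)].
  by rewrite phiN // h1 (hx _).2 subrr.
pose sA t u := proj1_sig (constructive_indefinite_description _ (dA t u)).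
have hsA : forall t u a, ~ List.In a (sA t u) -> eA t u a = 0.
  by move=> t u; exact: (proj2_sig (constructive_indefinite_description _ (dA t u))).
pose sM t u := proj1_sig (constructive_indefinite_description _ (dM t u)).
have hsM : forall t u a, ~ List.In a (sM t u) -> eM t u a = 0.
  by move=> t u; exact: (proj2_sig (constructive_indefinite_description _ (dM t u))).
pose s1 := proj1_sig (constructive_indefinite_description _ d1).
have hs1 : forall a, ~ List.In a s1 -> e1 a = 0.
  exact: (proj2_sig (constructive_indefinite_description _ d1)).
pose F := s1 ++ List.flat_map (fun t => List.flat_map (fun u => sA t u ++ sM t u) (enum K)) (enum K).
have inF : forall t u a, List.In a (sA t u) \/ List.In a (sM t u) -> List.In a F.
  move=> t u a H; apply/List.in_app_iff; right; apply/List.in_flat_map; exists t; split.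
    by apply: mem_In; rewrite mem_enum.
  apply/List.in_flat_map; exists u; split; first by apply: mem_In; rewrite mem_enum.
  by apply/List.in_app_iff.
have in1 : forall a, List.In a s1 -> List.In a F.
  by move=> a H; apply/List.in_app_iff; left.
pose nu (t : K) : prodR R := fun a =>
  if excluded_middle_informative (List.In a F) then alg a t else x t a.
have nuF : forall t a, ~ List.In a F -> nu t a = x t a.
  by move=> t a H; rewrite /nu; case: excluded_middle_informative.
pose d t : prodR R := fun a => nu t a - x t a.
have dd : forall t, in_dsum (d t).
  by move=> t; exists F => a H; rewrite /d nuF // subrr.
have nuE : forall t, nu t = padd (x t) (d t).
  move=> t; apply: functional_extensionality_dep => a.
  by rewrite /padd /d addrC subrK.
have Snu : forall t, S (nu t).
  by move=> t; rewrite nuE; apply: (SD); [exact: (hx _).1|exact: hI].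
exists nu; split => //.
- split => //.
  + apply: functional_extensionality_dep => a; rewrite /nu.
    case: excluded_middle_informative => H; first by rewrite rmorph1.
    have : e1 a = 0 by apply: (hs1) => /in1.
    by rewrite /e1 /padd /popp /p1 => /eqP; rewrite subr_eq0 => /eqP.
  + move=> t u; apply: functional_extensionality_dep => a; rewrite /nu /padd.
    case: excluded_middle_informative => H; first by rewrite rmorphD.
    have : eA t u a = 0 by apply: (hsA) => H'; apply: H; apply: (inF t u); left.
    by rewrite /eA /padd /popp => /eqP; rewrite subr_eq0 => /eqP.
  + move=> t u; apply: functional_extensionality_dep => a; rewrite /nu /pmul.
    case: excluded_middle_informative => H; first by rewrite rmorphM.
    have : eM t u a = 0 by apply: (hsM) => H'; apply: H; apply: (inF t u); right.
    by rewrite /eM /pmul /padd /popp => /eqP; rewrite subr_eq0 => /eqP.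
- move=> t; rewrite nuE hD; [|exact: (hx _).1|exact: hI].
  by rewrite (hx _).2 (hker _ (hI _ (dd t))).2 ?addr0.
Qed.
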